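(* Let $\mathbb{F}_2$ be the free group on $a,b$ with word length $\ell$ with respect to $\{a^{\pm1},b^{\pm1}\}$, and let $\alpha(n):=\min\{\ell(w)\mid w\in\gamma_n(\mathbb{F}_2)\setminus\{e\}\}$ and $\alpha:=\lim_{n\to\infty}\frac{\log_2(\alpha(n))}{\log_2(n)}$. There is a constant $C''>0$ such that $\alpha(n)\le C''\cdot n^{\log_\varphi(2)}$ for infinitely many $n\in\mathbb{N}$; consequently $\alpha\le\log_\varphi(2)$, where $\varphi$ is the golden ratio.
   Context: $\gamma_n(\mathbb{F}_2)$ denotes the $n$-th term of the lower central series: $\gamma_1(\mathbb{F}_2)=\mathbb{F}_2$, $\gamma_{n+1}(\mathbb{F}_2)=[\gamma_n(\mathbb{F}_2),\mathbb{F}_2]$. The limit defining $\alpha$ is known to exist. *)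

(* Defs.v *)
(* The free group F_2 on a, b is modelled concretely by
   freely reduced words over the alphabet {a, a^-1, b, b^-1}. *)
From Stdlib Require Import Reals List Bool.
Import ListNotations.
Open Scope R_scope.

Inductive gen : Type := ga | gb.

(* a letter: a generator together with an "inverted" flag *)
Definition letter : Type := (gen * bool)%type.

Definition letter_eq_dec (x y : letter) : {x = y} + {x <> y}.
Proof. decide equality; decide equality. Defined.

Definition linv (x : letter) : letter := (fst x, negb (snd x)).

Definition word := list letter.

Definition cons_red (x : letter) (w : word) : word :=
  match w with
  | y :: r => if letter_eq_dec y (linv x) then r else x :: y :: r
  | [] => [x]
  end.

Fixpoint red (w : word) : word :=
  match w with
  | [] => []
  | x :: r => cons_red x (red r)
  end.

Definition reduced (w : word) : Prop := red w = w.

Definition fg_one : word := [].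
Definition fg_mul (u v : word) : word := red (u ++ v).
Definition fg_inv (u : word) : word := rev (map linv u).
Definition fg_comm (x y : word) : word :=
  fg_mul (fg_mul (fg_inv x) (fg_inv y)) (fg_mul x y).

Definition wlen (w : word) : nat := length w.

(* lower central series: gamma 1 = F_2, gamma (n+1) = [gamma n, F_2],
   the subgroup generated by commutators [x, y], x in gamma n, y in F_2.
   (gamma 0 is irrelevant/unused.) *)
Inductive gamma : nat -> word -> Prop :=
| gamma_top : forall w, gamma 1 (red w)
| gamma_comm : forall n x y, gamma (S n) x -> reduced y ->
    gamma (S (S n)) (fg_comm x y)
| gamma_one : forall n, gamma n fg_one
| gamma_mul : forall n x y, gamma n x -> gamma n y -> gamma n (fg_mul x y)
| gamma_inv : forall n x, gamma n x -> gamma n (fg_inv x).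

Definition is_alpha (n m : nat) : Prop :=
  (exists w, gamma n w /\ w <> fg_one /\ wlen w = m) /\
  (forall w, gamma n w -> w <> fg_one -> (m <= wlen w)%nat).

Definition golden_ratio : R := (1 + sqrt 5) / 2.
Definition log2 (x : R) : R := ln x / ln 2.
Definition log_phi (x : R) : R := ln x / ln golden_ratio.

(* Main.v *)
Require Import Defs.
From Stdlib Require Import Reals.
From Stdlib Require Import List Bool Lia Arith Lra Classical ZArith.
Import ListNotations.
Open Scope R_scope.
Local Open Scope nat_scope.

Lemma linv_inv (x : letter) : linv (linv x) = x.
Proof. destruct x as [g s]; unfold linv; simpl; now rewrite negb_involutive. Qed.

Lemma linv_neq (x : letter) : linv x <> x.
Proof. destruct x as [g s]; unfold linv; simpl; intro H; inversion H; destruct s; discriminate. Qed.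

Fixpoint rd (w : word) : Prop :=
  match w with
  | [] => True
  | x :: r => match r with [] => True | y :: _ => y <> linv x end /\ rd r
  end.

Lemma rd_cons_red x w : rd w -> rd (cons_red x w).
Proof.
  destruct w as [|y r]; simpl; auto.
  destruct (letter_eq_dec y (linv x)); simpl; tauto.
Qed.

Lemma rd_red w : rd (red w).
Proof. induction w; simpl; auto using rd_cons_red. Qed.

Lemma red_rd w : rd w -> red w = w.
Proof.
  induction w as [|x r IH]; simpl; auto.
  intros [H1 H2]. rewrite IH by auto.
  destruct r as [|y r']; simpl; auto.
  destruct (letter_eq_dec y (linv x)); [contradiction|reflexivity].
Qed.

Lemma reduced_rd w : reduced w -> rd w.
Proof. unfold reduced; intro H; rewrite <- H; apply rd_red. Qed.

Lemma red_idem w : red (red w) = red w.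
Proof. apply red_rd, rd_red. Qed.

Lemma cancel x W : rd W -> cons_red x (cons_red (linv x) W) = W.
Proof.
  destruct W as [|y r].
  - intros _. change (cons_red x [linv x] = []). unfold cons_red.
    destruct (letter_eq_dec (linv x) (linv x)) as [|n]; [reflexivity|now elim n].
  - intros [H1 H2]. change (cons_red x (if letter_eq_dec y (linv (linv x)) then r else linv x :: y :: r) = y :: r).
    destruct (letter_eq_dec y (linv (linv x))) as [e|n].
    + rewrite linv_inv in e; subst y.
      destruct r as [|z r']; [reflexivity|].
      unfold cons_red. destruct (letter_eq_dec z (linv x)); [contradiction|reflexivity].
    + unfold cons_red. destruct (letter_eq_dec (linv x) (linv x)) as [|n']; [reflexivity|now elim n'].
Qed.

Lemma red_app u v : red (u ++ v) = fold_right cons_red (red v) u.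
Proof. induction u; simpl; congruence. Qed.

Lemma red_app_r u v : red (u ++ red v) = red (u ++ v).
Proof. rewrite !red_app, red_idem; reflexivity. Qed.

Lemma red_cons_red_app x w v :
  red (cons_red x w ++ v) = cons_red x (red (w ++ v)).
Proof.
  destruct w as [|y r]; simpl; auto.
  destruct (letter_eq_dec y (linv x)) as [e|n]; simpl; auto.
  subst y. rewrite cancel; auto. apply rd_red.
Qed.

Lemma red_app_l u v : red (red u ++ v) = red (u ++ v).
Proof.
  induction u as [|x u IH]; simpl; auto.
  rewrite red_cons_red_app, IH; reflexivity.
Qed.

Lemma fg_inv_inv u : fg_inv (fg_inv u) = u.
Proof.
  unfold fg_inv. rewrite map_rev, rev_involutive, map_map.
  induction u; simpl; auto. rewrite linv_inv; congruence.
Qed.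

Lemma fg_inv_app u v : fg_inv (u ++ v) = fg_inv v ++ fg_inv u.
Proof. unfold fg_inv. rewrite map_app, rev_app_distr; reflexivity. Qed.

Lemma fg_inv_cons x u : fg_inv (x :: u) = fg_inv u ++ [linv x].
Proof. reflexivity. Qed.

Lemma red_inv_cancel u v : red (fg_inv u ++ u ++ v) = red v.
Proof.
  revert v; induction u as [|x u IH]; intro v; [reflexivity|].
  rewrite fg_inv_cons, <- app_assoc.
  change ([linv x] ++ (x :: u) ++ v) with (linv x :: x :: (u ++ v)).
  rewrite red_app.
  change (red (linv x :: x :: u ++ v)) with (cons_red (linv x) (cons_red x (red (u ++ v)))).
  replace (cons_red (linv x) (cons_red x (red (u ++ v)))) with (red (u ++ v)).
  - rewrite <- red_app. apply IH.
  - pattern x at 2. rewrite <- (linv_inv x). rewrite cancel; auto. apply rd_red.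
Qed.

Lemma red_cancel_inv u v : red (u ++ fg_inv u ++ v) = red v.
Proof.
  rewrite <- (fg_inv_inv u) at 1. apply red_inv_cancel.
Qed.

Lemma rd_snoc l z : rd l -> (forall l' y, l = l' ++ [y] -> z <> linv y) -> rd (l ++ [z]).
Proof.
  induction l as [|x l IH]; simpl; auto.
  intros [H1 H2] H. split.
  - destruct l as [|y l'].
    + simpl. intro e. subst z. apply (H [] x); auto.
    + simpl. exact H1.
  - apply IH; auto. intros l' y e. apply (H (x :: l')). simpl; congruence.
Qed.

Lemma rd_inv w : rd w -> rd (fg_inv w).
Proof.
  induction w as [|x w IH]; [intros; exact I|].
  intros [H1 H2]. rewrite fg_inv_cons. apply rd_snoc; auto.
  intros l' y e. destruct w as [|y0 w'].
  - destruct l' as [|? [|]]; simpl in e; discriminate.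
  - rewrite fg_inv_cons in e. apply app_inj_tail in e. destruct e as [_ e]. subst y.
    intro e. apply H1. rewrite linv_inv in e. symmetry. exact e.
Qed.

Lemma red_inv C : red (fg_inv C) = fg_inv (red C).
Proof.
  rewrite <- (red_rd (fg_inv (red C))) by (apply rd_inv, rd_red).
  rewrite <- (red_inv_cancel C (fg_inv (red C))).
  rewrite <- red_app_r.
  assert (E : red (C ++ fg_inv (red C)) = []).
  { rewrite <- red_app_l. rewrite <- (app_nil_r (fg_inv (red C))).
    rewrite red_cancel_inv. reflexivity. }
  rewrite E, app_nil_r. reflexivity.
Qed.

Inductive gx : Type :=
| GV (i : nat) | G1 | GM (a b : gx) | GI (a : gx) | GC (a b : gx).

Fixpoint geval (env : nat -> word) (e : gx) : word :=
  match e with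
  | GV i => env i
  | G1 => fg_one
  | GM a b => fg_mul (geval env a) (geval env b)
  | GI a => fg_inv (geval env a)
  | GC a b => fg_comm (geval env a) (geval env b)
  end.

Definition sym := (nat * bool)%type.
Definition sflip (x : sym) : sym := (fst x, negb (snd x)).
Definition sinv (l : list sym) : list sym := rev (map sflip l).

Fixpoint flat (e : gx) : list sym :=
  match e with
  | GV i => [(i, false)]
  | G1 => []
  | GM a b => flat a ++ flat b
  | GI a => sinv (flat a)
  | GC a b => (sinv (flat a) ++ sinv (flat b)) ++ (flat a ++ flat b)
  end.

Definition blk (env : nat -> word) (x : sym) : word :=
  if snd x then fg_inv (env (fst x)) else env (fst x).

Definition cat env (l : list sym) : word := concat (map (blk env) l).

Lemma cat_app env l1 l2 : cat env (l1 ++ l2) = cat env l1 ++ cat env l2.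
Proof. unfold cat. rewrite map_app, concat_app. reflexivity. Qed.

Lemma blk_flip env x : blk env (sflip x) = fg_inv (blk env x).
Proof. destruct x as [i [|]]; unfold blk, sflip; simpl; rewrite ?fg_inv_inv; reflexivity. Qed.

Lemma cat_sinv env l : cat env (sinv l) = fg_inv (cat env l).
Proof.
  induction l as [|x l IH]; [reflexivity|].
  change (sinv (x :: l)) with (sinv l ++ [sflip x]).
  change (cat env (x :: l)) with (blk env x ++ cat env l).
  rewrite cat_app, IH, fg_inv_app.
  change (cat env [sflip x]) with (blk env (sflip x) ++ []).
  rewrite app_nil_r, blk_flip. reflexivity.
Qed.

Lemma mul_sound A B : fg_mul (red A) (red B) = red (A ++ B).
Proof. unfold fg_mul. rewrite red_app_l, red_app_r. reflexivity. Qed.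

Lemma inv_sound A : fg_inv (red A) = red (fg_inv A).
Proof. rewrite red_inv. reflexivity. Qed.

Lemma geval_sound env (H : forall i, rd (env i)) e :
  geval env e = red (cat env (flat e)).
Proof.
  induction e; simpl.
  - unfold cat, blk; simpl. rewrite app_nil_r. symmetry; apply red_rd; auto.
  - reflexivity.
  - rewrite IHe1, IHe2, cat_app, mul_sound. reflexivity.
  - rewrite IHe, cat_sinv, inv_sound. reflexivity.
  - unfold fg_comm. rewrite IHe1, IHe2, !inv_sound, !mul_sound, !cat_app, !cat_sinv. reflexivity.
Qed.

Definition sym_eqb (x y : sym) : bool :=
  Nat.eqb (fst x) (fst y) && Bool.eqb (snd x) (snd y).

Definition scons (x : sym) (l : list sym) : list sym :=
  match l with
  | y :: r => if sym_eqb y (sflip x) then r else x :: y :: r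
  | [] => [x]
  end.

Fixpoint sred (l : list sym) : list sym :=
  match l with [] => [] | x :: r => scons x (sred r) end.

Lemma sym_eqb_true x y : sym_eqb x y = true -> x = y.
Proof.
  destruct x as [i s], y as [j t]; unfold sym_eqb; simpl.
  intro H. apply andb_true_iff in H. destruct H as [H1 H2].
  apply Nat.eqb_eq in H1. apply eqb_prop in H2. subst; reflexivity.
Qed.

Lemma red_cat_scons env x l :
  red (cat env (scons x l)) = red (blk env x ++ cat env l).
Proof.
  destruct l as [|y r]; simpl.
  - unfold cat; simpl. reflexivity.
  - destruct (sym_eqb y (sflip x)) eqn:E.
    + apply sym_eqb_true in E. subst y.
      unfold cat; simpl. fold (cat env r). rewrite blk_flip, red_cancel_inv. reflexivity.
    + reflexivity.
Qed.

Lemma red_cat_sred env l : red (cat env (sred l)) = red (cat env l).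
Proof.
  induction l as [|x l IH]; [reflexivity|].
  simpl. rewrite red_cat_scons.
  rewrite <- red_app_r, IH, red_app_r. reflexivity.
Qed.

Theorem gx_eq env (H : forall i, rd (env i)) e1 e2 :
  sred (flat e1) = sred (flat e2) -> geval env e1 = geval env e2.
Proof.
  intro E. rewrite !geval_sound by auto.
  rewrite <- (red_cat_sred env (flat e1)), <- (red_cat_sred env (flat e2)), E.
  reflexivity.
Qed.

Definition envl (l : list word) : nat -> word := fun i => nth i l [].

Lemma envl_rd l : Forall rd l -> forall i, rd (envl l i).
Proof.
  intros H i. unfold envl. revert i; induction H; intro i; destruct i; simpl; auto; exact I.
Qed.

Definition cj (g w : word) : word := fg_mul (fg_mul (fg_inv g) w) g.

Ltac rdl := repeat constructor; auto.

Lemma id_conj x y : rd x -> rd y -> cj y x = fg_mul x (fg_comm x y).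
Proof.
  intros Hx Hy.
  exact (gx_eq (envl [x;y]) (envl_rd [x;y] ltac:(rdl))
    (GM (GM (GI (GV 1)) (GV 0)) (GV 1)) (GM (GV 0) (GC (GV 0) (GV 1)))
    ltac:(vm_compute; reflexivity)).
Qed.

Lemma id_comm_one x : rd x -> fg_comm x fg_one = fg_one.
Proof.
  intros Hx.
  exact (gx_eq (envl [x]) (envl_rd [x] ltac:(rdl))
    (GC (GV 0) G1) G1 ltac:(vm_compute; reflexivity)).
Qed.

Lemma id_comm_mul x y1 y2 : rd x -> rd y1 -> rd y2 ->
  fg_comm x (fg_mul y1 y2) = fg_mul (fg_comm x y2) (cj y2 (fg_comm x y1)).
Proof.
  intros H0 H1 H2.
  exact (gx_eq (envl [x;y1;y2]) (envl_rd [x;y1;y2] ltac:(rdl))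
    (GC (GV 0) (GM (GV 1) (GV 2)))
    (GM (GC (GV 0) (GV 2)) (GM (GM (GI (GV 2)) (GC (GV 0) (GV 1))) (GV 2)))
    ltac:(vm_compute; reflexivity)).
Qed.

Lemma id_comm_inv x y : rd x -> rd y ->
  fg_comm x (fg_inv y) = cj (fg_inv y) (fg_inv (fg_comm x y)).
Proof.
  intros H0 H1.
  exact (gx_eq (envl [x;y]) (envl_rd [x;y] ltac:(rdl))
    (GC (GV 0) (GI (GV 1)))
    (GM (GM (GI (GI (GV 1))) (GI (GC (GV 0) (GV 1)))) (GI (GV 1)))
    ltac:(vm_compute; reflexivity)).
Qed.

Lemma id_hw x z f : rd x -> rd z -> rd f ->
  fg_comm x (fg_comm z f) =
  cj f (fg_mul (cj x (fg_comm (fg_comm (fg_inv f) (fg_inv x)) z))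
               (cj z (fg_comm (fg_comm x (fg_inv z)) (fg_inv f)))).
Proof.
  intros H0 H1 H2.
  exact (gx_eq (envl [x;z;f]) (envl_rd [x;z;f] ltac:(rdl))
    (GC (GV 0) (GC (GV 1) (GV 2)))
    (GM (GM (GI (GV 2))
      (GM (GM (GM (GI (GV 0)) (GC (GC (GI (GV 2)) (GI (GV 0))) (GV 1))) (GV 0))
          (GM (GM (GI (GV 1)) (GC (GC (GV 0) (GI (GV 1))) (GI (GV 2)))) (GV 1))))
      (GV 2))
    ltac:(vm_compute; reflexivity)).
Qed.

Lemma id_comm_swap x f : rd x -> rd f ->
  fg_comm f x = fg_inv (fg_comm x f).
Proof.
  intros H0 H1.
  exact (gx_eq (envl [x;f]) (envl_rd [x;f] ltac:(rdl))
    (GC (GV 1) (GV 0)) (GI (GC (GV 0) (GV 1))) ltac:(vm_compute; reflexivity)).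
Qed.

Lemma gamma_rd n w : gamma n w -> rd w.
Proof.
  induction 1.
  - apply rd_red.
  - unfold fg_comm, fg_mul. apply rd_red.
  - exact I.
  - unfold fg_mul. apply rd_red.
  - apply rd_inv; auto.
Qed.

Lemma gamma1_all w : rd w -> gamma 1 w.
Proof. intro H. rewrite <- (red_rd w H). apply gamma_top. Qed.

Lemma gamma_SS_sub n : forall w, gamma (S (S n)) w -> gamma (S n) w.
Proof.
  induction n as [|n IHn]; intros w H.
  - remember 2%nat as m eqn:Em; revert Em;
    induction H as [w0|k x y Hx IHx Hy|k|k x y Hx IHx Hy IHy|k x Hx IHx]; intro Em.
    + discriminate.
    + apply gamma1_all. unfold fg_comm, fg_mul. apply rd_red.
    + apply gamma_one.
    + apply gamma_mul; auto.
    + apply gamma_inv; auto.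
  - remember (S (S (S n))) as m eqn:Em; revert Em;
    induction H as [w0|k x y Hx IHx Hy|k|k x y Hx IHx Hy IHy|k x Hx IHx]; intro Em.
    + discriminate.
    + assert (k = S n) by lia. subst k. apply gamma_comm; auto.
    + apply gamma_one.
    + apply gamma_mul; auto.
    + apply gamma_inv; auto.
Qed.

Lemma gamma_mono n m w : (1 <= n <= m)%nat -> gamma m w -> gamma n w.
Proof.
  intros [H1 H2]. induction H2; auto.
  intro H. apply IHle. destruct m as [|m]; [lia|]. apply gamma_SS_sub; auto.
Qed.

Lemma gamma_cj n x y : (1 <= n)%nat -> gamma n x -> rd y -> gamma n (cj y x).
Proof.
  intros Hn Hx Hy. rewrite id_conj; [|eapply gamma_rd; eauto|auto].
  apply gamma_mul; auto. destruct n as [|n]; [lia|].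
  apply gamma_SS_sub. apply gamma_comm; auto. rewrite <- (red_rd y Hy). 
  unfold reduced. apply red_idem.
Qed.

Lemma rd_reduced w : rd w -> reduced w.
Proof. apply red_rd. Qed.

Lemma rd_mul u v : rd (fg_mul u v).
Proof. apply rd_red. Qed.

Lemma rd_comm u v : rd (fg_comm u v).
Proof. apply rd_red. Qed.

Lemma comm_deg j : (1 <= j)%nat -> forall i x y, (1 <= i)%nat -> gamma i x -> gamma j y ->
  gamma (i + j) (fg_comm x y).
Proof.
  induction j as [|j IHj]; intros Hj i x y Hi Hx Hy; [lia|].
  destruct i as [|i']; [lia|].
  destruct j as [|j''].
  - replace (S i' + 1)%nat with (S (S i')) by lia.
    apply gamma_comm; auto. apply rd_reduced; eapply gamma_rd; eauto.
  - assert (Rx : rd x) by (eapply gamma_rd; eauto).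
    remember (S (S j'')) as m eqn:Em. revert Em.
    induction Hy as [w0|k z f Hz IHz Hf|k|k y1 y2 H1 IH1 H2 IH2|k y1 H1 IH1]; intro Em.
    + discriminate.
    + assert (k = j'') by lia. subst k. clear IHz.
      assert (Rz : rd z) by (eapply gamma_rd; eauto).
      assert (Rf : rd f) by (apply reduced_rd; auto).
      rewrite id_hw by auto.
      apply gamma_cj; [lia| |auto].
      apply gamma_mul; apply gamma_cj; auto; try lia.
      *
        assert (HB1 : gamma (S (S i')) (fg_comm (fg_inv f) (fg_inv x))).
        { rewrite id_comm_swap by (apply rd_inv; auto). apply gamma_inv.
          apply gamma_comm. apply gamma_inv; auto. apply rd_reduced, rd_inv; auto. }
        replace (S i' + S (S j''))%nat with (S (S i') + S j'')%nat by lia.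
        apply IHj; auto; lia.
      *
        assert (HA1 : gamma (S i' + S j'') (fg_comm x (fg_inv z))).
        { apply IHj; auto; try lia. apply gamma_inv; auto. }
        replace (S i' + S (S j''))%nat with (S (S (i' + S j''))) by lia.
        apply gamma_comm. exact HA1. apply rd_reduced, rd_inv; auto.
    + rewrite id_comm_one by auto. apply gamma_one.
    + subst k.
      assert (R1 : rd y1) by (eapply gamma_rd; eauto).
      assert (R2 : rd y2) by (eapply gamma_rd; eauto).
      rewrite id_comm_mul by auto. apply gamma_mul; auto.
      apply gamma_cj; auto; lia.
    + subst k.
      assert (R1 : rd y1) by (eapply gamma_rd; eauto).
      rewrite id_comm_inv by auto. apply gamma_cj; [lia| |apply rd_inv; auto].
      apply gamma_inv; auto.
Qed.

Definition rho_l (x : letter) : word :=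
  match x with
  | (ga, false) => [(gb, true); (ga, true)]
  | (ga, true) => [(ga, false); (gb, false)]
  | (gb, false) => [(gb, false); (ga, false)]
  | (gb, true) => [(ga, true); (gb, true)]
  end.

Definition rho (w : word) : word := concat (map rho_l w).

Lemma rho_app u v : rho (u ++ v) = rho u ++ rho v.
Proof. unfold rho. rewrite map_app, concat_app. reflexivity. Qed.

Lemma rho_l_linv x : rho_l (linv x) = fg_inv (rho_l x).
Proof. destruct x as [[|] [|]]; reflexivity. Qed.

Lemma rho_inv u : rho (fg_inv u) = fg_inv (rho u).
Proof.
  induction u as [|x u IH]; [reflexivity|].
  rewrite fg_inv_cons, rho_app, IH.
  change (rho (x :: u)) with (rho_l x ++ rho u).
  rewrite fg_inv_app. change (rho [linv x]) with (rho_l (linv x) ++ []). rewrite app_nil_r, rho_l_linv. reflexivity.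
Qed.

Lemma red_rho_cons_red x W :
  red (rho (cons_red x W)) = red (rho_l x ++ rho W).
Proof.
  destruct W as [|y r]; [reflexivity|].
  unfold cons_red. destruct (letter_eq_dec y (linv x)) as [e|n].
  - subst y. change (rho (linv x :: r)) with (rho_l (linv x) ++ rho r).
    rewrite rho_l_linv, red_cancel_inv. reflexivity.
  - reflexivity.
Qed.

Lemma red_rho_red w : red (rho (red w)) = red (rho w).
Proof.
  induction w as [|x w IH]; [reflexivity|].
  change (red (x :: w)) with (cons_red x (red w)).
  rewrite red_rho_cons_red.
  change (rho (x :: w)) with (rho_l x ++ rho w).
  rewrite <- red_app_r, IH, red_app_r. reflexivity.
Qed.

Lemma rd_cons_intro x y r : rd (y :: r) -> y <> linv x -> rd (x :: y :: r).
Proof. intros H1 H2. split; auto. Qed.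

Lemma rd_rho w : rd w -> rd (rho w).
Proof.
  induction w as [|x w IH]; [intros; exact I|].
  intros [H1 H2]. specialize (IH H2).
  change (rho (x :: w)) with (rho_l x ++ rho w).
  destruct w as [|y w'].
  - destruct x as [[|] [|]]; simpl; repeat split; try discriminate; auto.
  - change (rho (y :: w')) with (rho_l y ++ rho w') in *.
    set (R := rho w') in *.
    destruct x as [[|] [|]]; destruct y as [[|] [|]]; cbn [rho_l app] in *;
      try (exfalso; apply H1; reflexivity);
      (apply rd_cons_intro; [apply rd_cons_intro; [exact IH|] |]);
      unfold linv; simpl; discriminate.
Qed.

Lemma rho_length w : length (rho w) = (2 * length w)%nat.
Proof.
  induction w as [|x w IH]; [reflexivity|].
  change (rho (x :: w)) with (rho_l x ++ rho w).
  rewrite length_app, IH. destruct x as [[|] [|]]; simpl; lia.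
Qed.

Lemma rho_mul u v : rd u -> rd v -> rho (fg_mul u v) = fg_mul (rho u) (rho v).
Proof.
  intros Hu Hv. unfold fg_mul.
  rewrite <- (red_rd (rho (red (u ++ v)))) by (apply rd_rho, rd_red).
  rewrite red_rho_red, rho_app. reflexivity.
Qed.

Lemma rho_comm u v : rd u -> rd v -> rho (fg_comm u v) = fg_comm (rho u) (rho v).
Proof.
  intros Hu Hv. unfold fg_comm.
  rewrite rho_mul by (apply rd_mul).
  rewrite (rho_mul u v) by auto.
  rewrite rho_mul by (apply rd_inv; auto).
  rewrite !rho_inv. reflexivity.
Qed.

Lemma rho_cj g w : rd g -> rd w -> rho (cj g w) = cj (rho g) (rho w).
Proof.
  intros Hg Hw. unfold cj.
  rewrite rho_mul by (auto using rd_mul).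
  rewrite rho_mul by (auto using rd_inv).
  rewrite rho_inv. reflexivity.
Qed.

Definition v1 : word := [(ga, true)].
Definition s (k : nat) : word := Nat.iter k rho [(ga, false); (gb, false)].
Definition prev (k : nat) : word := match k with 0 => v1 | S k' => s k' end.

Lemma s_S k : s (S k) = rho (s k).
Proof. reflexivity. Qed.

Lemma rd_s k : rd (s k).
Proof. induction k; [simpl; split; [discriminate|split; exact I]|]. rewrite s_S; apply rd_rho; auto. Qed.

Lemma rd_prev k : rd (prev k).
Proof. destruct k; [split; exact I|apply rd_s]. Qed.

Lemma length_s k : length (s k) = (2 ^ (S k))%nat.
Proof. induction k; [reflexivity|]. rewrite s_S, rho_length, IHk. simpl. lia. Qed.

Lemma rho_prev k : rho (prev k) = prev (S k).
Proof. destruct k; reflexivity. Qed.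

Lemma s_rec k : exists G, rd G /\ s (S k) = cj G (fg_comm (prev k) (s k)).
Proof.
  induction k as [|k [G [HG E]]].
  - exists [(ga, false)]. split; [split; exact I|]. vm_compute. reflexivity.
  - exists (rho G). split; [apply rd_rho; auto|].
    rewrite (s_S (S k)). rewrite E at 1.
    rewrite rho_cj by (auto using rd_comm).
    rewrite rho_comm by (auto using rd_prev, rd_s).
    rewrite rho_prev. reflexivity.
Qed.
Local Open Scope R_scope.

Fixpoint fib (n : nat) : nat :=
  match n with
  | O => O
  | S O => 1%nat
  | S ((S m) as p) => (fib p + fib m)%nat
  end.

Lemma fib_SS n : fib (S (S n)) = (fib (S n) + fib n)%nat.
Proof. reflexivity. Qed.

Lemma fib_pos n : (1 <= fib (S n))%nat.
Proof.
  induction n as [|n IH]; [simpl; lia|]. rewrite fib_SS. lia.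
Qed.

Lemma fib_ge n : (n + 1 <= fib (n + 2))%nat.
Proof.
  induction n as [|n IH]; [simpl; lia|].
  replace (S n + 2)%nat with (S (S (S n))) by lia. rewrite fib_SS.
  replace (S (S n)) with (n + 2)%nat by lia. pose proof (fib_pos n). lia.
Qed.

Lemma mem k : gamma (fib (k + 2)) (s k) /\ gamma (fib (k + 1)) (prev k).
Proof.
  induction k as [|k [IH1 IH2]].
  - split; apply gamma1_all; [apply rd_s|apply rd_prev].
  - destruct (s_rec k) as [G [HG E]]. split.
    + rewrite E. replace (S k + 2)%nat with (S (S (S k))) by lia.
      rewrite fib_SS.
      replace (S (S k)) with (k + 2)%nat by lia.
      replace (S k) with (k + 1)%nat by lia.
      assert (P1 : (1 <= fib (k + 1))%nat) by (replace (k+1)%nat with (S k) by lia; apply fib_pos).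
      assert (P2 : (1 <= fib (k + 2))%nat) by (replace (k+2)%nat with (S (S k)) by lia; apply fib_pos).
      apply gamma_cj; [lia| |auto].
      rewrite Nat.add_comm. apply comm_deg; auto.
    + replace (S k + 1)%nat with (k + 2)%nat by lia. exact IH1.
Qed.

Lemma exists_min n L : (exists w, gamma n w /\ w <> fg_one /\ wlen w = L) ->
  exists m, is_alpha n m /\ (m <= L)%nat.
Proof.
  induction L as [L IH] using (well_founded_induction lt_wf).
  intros [w [H1 [H2 H3]]].
  destruct (classic (exists w', gamma n w' /\ w' <> fg_one /\ (wlen w' < L)%nat)) as
    [[w' [G1 [G2 G3]]]|NE].
  - destruct (IH (wlen w') G3) as [m [Hm1 Hm2]].
    + exists w'; auto.
    + exists m; split; auto; lia.
  - exists L. split; [|lia]. split.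
    + exists w; auto.
    + intros w' G1 G2. destruct (Nat.lt_ge_cases (wlen w') L) as [Hl|Hl]; auto.
      exfalso; apply NE; exists w'; auto.
Qed.

Definition phi := golden_ratio.

Lemma sqrt5_bounds : 1 < sqrt 5 <= 3.
Proof.
  split.
  - rewrite <- sqrt_1. apply sqrt_lt_1; lra.
  - replace 3 with (sqrt (3 * 3)) by (rewrite sqrt_square; lra).
    apply sqrt_le_1; lra.
Qed.

Lemma phi_gt1 : 1 < phi.
Proof. unfold phi, golden_ratio. pose proof sqrt5_bounds. lra. Qed.

Lemma phi_sq : phi * phi = phi + 1.
Proof.
  unfold phi, golden_ratio. pose proof (sqrt_sqrt 5 ltac:(lra)). nra.
Qed.

Lemma fib_phi k : phi ^ k <= INR (fib (k + 2)) /\ phi ^ (S k) <= INR (fib (k + 3)).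
Proof.
  induction k as [|k [IH1 IH2]].
  - simpl. pose proof sqrt5_bounds. unfold phi, golden_ratio. lra.
  - split.
    + replace (S k + 2)%nat with (k + 3)%nat by lia. exact IH2.
    + replace (phi ^ S (S k)) with (phi ^ S k + phi ^ k).
      2:{ replace (phi ^ S (S k)) with (phi ^ k * (phi * phi)) by (simpl; ring).
          rewrite phi_sq. simpl; ring. }
      replace (S k + 3)%nat with (S (S (S (S k)))) by lia. rewrite fib_SS, plus_INR.
      replace (S (S (S k))) with (k + 3)%nat by lia.
      replace (S (S k)) with (k + 2)%nat by lia.
      lra.
Qed.

Lemma ln_le' x y : 0 < x -> x <= y -> ln x <= ln y.
Proof.
  intros Hx Hxy. destruct Hxy as [H|H]; [left; apply ln_increasing; auto|subst; lra].
Qed.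

Lemma exp_le' x y : x <= y -> exp x <= exp y.
Proof. intros [H|H]; [left; apply exp_increasing; auto|subst; lra]. Qed.

Lemma key_bound k : INR (2 ^ S k) <= 2 * Rpower (INR (fib (k + 2))) (log_phi 2).
Proof.
  rewrite pow_INR. replace (INR 2) with 2 by (simpl; lra).
  pose proof phi_gt1 as Hp. pose proof (fib_phi k) as [Hf _].
  assert (Hlp : 0 < ln phi) by (rewrite <- ln_1; apply ln_increasing; lra).
  assert (Hpk : 0 < phi ^ k) by (apply pow_lt; lra).
  assert (E2 : 2 ^ k = exp (INR k * ln 2)).
  { rewrite <- ln_pow by lra. rewrite exp_ln; auto. apply pow_lt; lra. }
  replace (2 ^ S k) with (2 * 2 ^ k) by (simpl; ring).
  apply Rmult_le_compat_l; [lra|]. rewrite E2. unfold Rpower. apply exp_le'.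
  assert (L : INR k * ln phi <= ln (INR (fib (k + 2)))).
  { rewrite <- ln_pow by lra. apply ln_le'; auto. }
  unfold log_phi. fold phi.
  assert (H2 : 0 < ln 2) by (rewrite <- ln_1; apply ln_increasing; lra).
  replace (INR k * ln 2) with (ln 2 / ln phi * (INR k * ln phi)) by (field; lra).
  apply Rmult_le_compat_l; [left; apply Rdiv_lt_0_compat; auto| exact L].
Qed.

Lemma nat_arch r : exists n : nat, r < INR n.
Proof.
  exists (Z.to_nat (up r)). destruct (archimed r) as [H _].
  destruct (Z_le_gt_dec 0 (up r)) as [Hz|Hz].
  - rewrite INR_IZR_INZ, Z2Nat.id by lia. lra.
  - assert (IZR (up r) < 0) by (apply IZR_lt; lia). pose proof (pos_INR (Z.to_nat (up r))). lra.
Qed.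

Lemma part1 : exists C : R, 0 < C /\
     forall N : nat, exists n : nat, (N <= n)%nat /\ (1 <= n)%nat /\
       exists m : nat, is_alpha n m /\
         INR m <= C * Rpower (INR n) (log_phi 2).
Proof.
  exists 2. split; [lra|]. intros N. exists (fib (N + 2)).
  pose proof (fib_ge N). split; [lia|]. split; [lia|].
  destruct (mem N) as [Hm _].
  destruct (exists_min (fib (N + 2)) (2 ^ S N)) as [m [Ha Hle]].
  { exists (s N). split; auto. split.
    - intro E0. pose proof (length_s N) as L. rewrite E0 in L. simpl in L.
      pose proof (Nat.pow_nonzero 2 N ltac:(lia)). lia.
    - apply length_s. }
  exists m. split; auto.
  eapply Rle_trans; [apply le_INR; exact Hle|]. apply key_bound.
Qed.

Lemma is_alpha_unique n m1 m2 : is_alpha n m1 -> is_alpha n m2 -> m1 = m2.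
Proof.
  intros [[w1 [G1 [N1 L1]]] H1] [[w2 [G2 [N2 L2]]] H2].
  specialize (H1 w2 G2 N2). specialize (H2 w1 G1 N1). lia.
Qed.

Lemma is_alpha_pos n m : is_alpha n m -> (1 <= m)%nat.
Proof.
  intros [[w [G [Nw L]]] _]. destruct w; [contradiction|]. simpl in L. unfold wlen in L. simpl in L. lia.
Qed.

Lemma part2 : forall (alpha_ : nat -> nat) (alpha_lim : R),
     (forall n, (1 <= n)%nat -> is_alpha n (alpha_ n)) ->
     Un_cv (fun n => log2 (INR (alpha_ n)) / log2 (INR n)) alpha_lim ->
     alpha_lim <= log_phi 2.
Proof.
  intros al lim Hal Hcv.
  set (c := log_phi 2).
  destruct (Rle_or_lt lim c) as [H|H]; auto. exfalso.
  set (eps := (lim - c) / 2).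
  assert (Heps : eps > 0) by (unfold eps; lra).
  destruct (Hcv eps Heps) as [N1 HN1].
  destruct (nat_arch (exp (ln 2 / eps))) as [N2 HN2].
  destruct part1 as [C0 [HC0 P]].
  clear C0 HC0 P.
  pose proof (fib_ge (max N1 (max N2 2))) as Hfg.
  set (K := max N1 (max N2 2)) in *.
  assert (HK : (N1 <= K /\ N2 <= K /\ 2 <= K)%nat) by (unfold K; lia).
  set (n := fib (K + 2)) in *.
  destruct (mem K) as [Hm _].
  destruct (exists_min n (2 ^ S K)) as [m [Ha Hle]].
  { exists (s K). split; auto. split.
    - intro E0. pose proof (length_s K) as L. rewrite E0 in L. simpl in L.
      pose proof (Nat.pow_nonzero 2 K ltac:(lia)). lia.
    - apply length_s. }
  assert (Hb : INR m <= 2 * Rpower (INR n) c).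
  { eapply Rle_trans; [apply le_INR; exact Hle|]. apply key_bound. }
  assert (Hn1 : (1 <= n)%nat) by lia.
  assert (Eal : al n = m) by (apply (is_alpha_unique n); auto).
  assert (Hm1 : (1 <= m)%nat) by (eapply is_alpha_pos; eauto).
  specialize (HN1 n ltac:(lia)). rewrite Eal in HN1.
  assert (Hn2 : 2 <= INR n) by (replace 2 with (INR 2) by (simpl; lra); apply le_INR; lia).
  assert (HnN2 : INR N2 <= INR n) by (apply le_INR; lia).
  assert (Hm1R : 1 <= INR m) by (replace 1 with (INR 1) by reflexivity; apply le_INR; lia).
  assert (Hl2 : 0 < ln 2) by (rewrite <- ln_1; apply ln_increasing; lra).
  set (t := ln (INR n)).
  assert (Ht : ln 2 <= t) by (apply ln_le'; lra).
  assert (Ht2 : ln 2 / eps < t).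
  { rewrite <- (ln_exp (ln 2 / eps)). apply ln_increasing; [apply exp_pos|lra]. }
  assert (Hmt : ln (INR m) <= ln 2 + c * t).
  { eapply Rle_trans; [apply ln_le'; [lra|exact Hb]|].
    rewrite ln_mult by (lra || apply exp_pos). unfold Rpower. rewrite ln_exp. unfold t. lra. }
  assert (Eu : log2 (INR m) / log2 (INR n) = ln (INR m) / t).
  { unfold log2. fold t. field. split; lra. }
  rewrite Eu in HN1. unfold Rdist in HN1. apply Rabs_def2 in HN1. destruct HN1 as [_ HN1].
  assert (Hti : 0 < / t) by (apply Rinv_0_lt_compat; lra).
  assert (Htt : t * / t = 1) by (field; lra).
  assert (Hx : ln 2 * / t < eps).
  { assert (ln 2 < eps * t).
    { apply (Rmult_lt_compat_l eps) in Ht2; auto. unfold Rdiv in Ht2.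
      replace (eps * (ln 2 * / eps)) with (ln 2) in Ht2 by (field; lra). lra. }
    nra. }
  assert (Hy : ln (INR m) / t <= ln 2 * / t + c).
  { unfold Rdiv. replace (ln 2 * / t + c) with ((ln 2 + c * t) * / t) by (field; lra).
    apply Rmult_le_compat_r; lra. }
  unfold eps in *. lra.
Qed.

Theorem proposition2p6 :
  (exists C : R, 0 < C /\
     forall N : nat, exists n : nat, (N <= n)%nat /\ (1 <= n)%nat /\
       exists m : nat, is_alpha n m /\
         INR m <= C * Rpower (INR n) (log_phi 2))
  /\
  (forall (alpha_ : nat -> nat) (alpha_lim : R),
     (forall n, (1 <= n)%nat -> is_alpha n (alpha_ n)) ->
     Un_cv (fun n => log2 (INR (alpha_ n)) / log2 (INR n)) alpha_lim ->
     alpha_lim <= log_phi 2).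
Proof.
  split; [exact part1 | exact part2].
Qed.
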